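(* Let $r,c\ge 1$ be integers, $n=r+c$, $N=2^n$, and let $X=(X_1,X_2)$ with $X_1\subset\{0,1\}^n$ the strings ending in $0^c$ and $X_2\subset\{0,1\}^n$ the strings beginning with $0^r$. Let $\varphi\sim\mathcal D_X$. Any quantum algorithm that makes $T$ queries to $\varphi$ and $\varphi^{-1}$ and outputs, with probability $\epsilon>0$, a pair $(x,y)\in X_1\times X_2$ with $\varphi(x)=y$, satisfies $$\epsilon\le\frac{80(T+1)^2}{2^{\min(r,c)}}.$$
   Context: Permutations of $\{0,1\}^n$ are identified with $S_N$. For $\pi\in S_N$, $X_\pi=\{(i,j): i\in X_1,\ j\in X_2,\ \pi(i)=j\}$ is its set of $X$-pairs. The distribution $\mathcal{D}_X$ on $S_N$ is $\Pr_{\Phi\sim\mathcal D_X}[\Phi=\varphi]=|X_\varphi|/\sum_{\sigma\in S_N}|X_\sigma|$. Queries are to the unitaries $O_\varphi:|a\rangle|b\rangle\mapsto|a\rangle|b\oplus\varphi(a)\rangle$ and $O_{\varphi^{-1}}:|a\rangle|b\rangle\mapsto|a\rangle|b\oplus\varphi^{-1}(a)\rangle$; the success probability is over $\varphi$ and the algorithm's randomness and measurements. *)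

(* Defs.v *)
From mathcomp Require Import all_boot all_order all_algebra fingroup perm algC.
Unset Printing Implicit Defensive.
Import Order.TTheory GRing.Theory Num.Theory.
Local Open Scope ring_scope.

(* n-bit strings; bit i is the i-th symbol of the string (index 0 = first). *)
Definition bits (n : nat) := {ffun 'I_n -> bool}.
Definition bzero (n : nat) : bits n := [ffun => false].
Definition bxor (n : nat) (x y : bits n) : bits n := [ffun i => x i (+) y i].

Definition X1 (r c : nat) : {set bits (r + c)} :=
  [set x : bits (r + c) | [forall i : 'I_(r + c), (r <= i)%N ==> ~~ x i]].
Definition X2 (r c : nat) : {set bits (r + c)} :=
  [set x : bits (r + c) | [forall i : 'I_(r + c), (i < r)%N ==> ~~ x i]].

Definition Xpairs (r c : nat) (p : {perm bits (r + c)})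
  : {set bits (r + c) * bits (r + c)} :=
  [set ij | [&& ij.1 \in X1 r c, ij.2 \in X2 r c & p ij.1 == ij.2]].

Definition DX (r c : nat) (p : {perm bits (r + c)}) : algC :=
  (#|Xpairs r c p|)%:R / (\sum_(s : {perm bits (r + c)}) #|Xpairs r c s|)%:R.

(* Register: query input |a>, answer |b>, workspace |w> (W+1 basis states). *)
Definition reg (n W : nat) := (bits n * bits n * 'I_W.+1)%type.
Definition state (n W : nat) := reg n W -> algC.
Definition op (n W : nat) := reg n W -> reg n W -> algC.

Definition applyop (n W : nat) (U : op n W) (psi : state n W) : state n W :=
  fun i => \sum_(j : reg n W) U i j * psi j.

Definition unitary (n W : nat) (U : op n W) : Prop :=
  forall i j : reg n W, \sum_(k : reg n W) (U k i)^* * U k j = (i == j)%:R.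

(* O_f : |a>|b>|w> -> |a>|b xor f(a)>|w> *)
Definition oracle (n W : nat) (f : {perm bits n}) : op n W :=
  fun i j => ((i.1.1 == j.1.1) && (i.1.2 == bxor n j.1.2 (f j.1.1))
              && (i.2 == j.2))%:R.

Definition init (n W : nat) : state n W :=
  fun i => (i == (bzero n, bzero n, ord0))%:R.

(* U_0, then for t = 1..T : query number t (to f if s (t-1) = false,
   to f^-1 if s (t-1) = true), followed by U_t. *)
Fixpoint run (n W : nat) (U : nat -> op n W) (s : nat -> bool)
    (f : {perm bits n}) (t : nat) : state n W :=
  match t with
  | 0 => applyop n W (U 0%N) (init n W)
  | t'.+1 => applyop n W (U t)
      (applyop n W (oracle n W (if s t' then (f^-1)%g else f)) (run n W U s f t'))
  end.

(* Probability of outputting (x,y) in X1 x X2 with f x = y, after measuring the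
   final state in the computational basis and post-processing with out. *)
Definition success (r c W T : nat) (U : nat -> op (r + c) W) (s : nat -> bool)
    (out : reg (r + c) W -> bits (r + c) * bits (r + c))
    (f : {perm bits (r + c)}) : algC :=
  \sum_(i : reg (r + c) W | [&& (out i).1 \in X1 r c, (out i).2 \in X2 r c
                              & f (out i).1 == (out i).2])
     `|run (r + c) W U s f T i| ^+ 2.

Definition eps (r c W T : nat) (U : nat -> op (r + c) W) (s : nat -> bool)
    (out : reg (r + c) W -> bits (r + c) * bits (r + c)) : algC :=
  \sum_(f : {perm bits (r + c)}) DX r c f * success r c W T U s out f.

(* Main.v *)
Require Import Defs.
From mathcomp Require Import all_boot all_order all_algebra fingroup perm algC.
From mathcomp.algebra_tactics Require Import ring.
Import Order.TTheory GRing.Theory Num.Theory.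
Local Open Scope ring_scope.
Set Implicit Arguments.
Unset Strict Implicit.

Lemma bxorK n (b c : bits n) : bxor n (bxor n b c) c = b.
Proof. by apply/ffunP => i; rewrite !ffunE addbK. Qed.

Lemma norm_add2 (p q : algC) : `|p + q| ^+ 2 <= 2%:R * `|p| ^+ 2 + 2%:R * `|q| ^+ 2.
Proof.
have E : `|p + q| ^+ 2 + `|p - q| ^+ 2 = 2%:R * `|p| ^+ 2 + 2%:R * `|q| ^+ 2.
  by rewrite !normCK !rmorphD !rmorphN /=; ring.
by rewrite -E lerDl exprn_ge0.
Qed.

Lemma norm_addt (t : nat) (p q : algC) :
  t%:R * `|p + q| ^+ 2 <= (t.+1)%:R * `|p| ^+ 2 + (t * t.+1)%N%:R * `|q| ^+ 2.
Proof.
have E : t%:R * `|p + q| ^+ 2 + `|p - t%:R * q| ^+ 2 =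
    (t.+1)%:R * `|p| ^+ 2 + (t * t.+1)%N%:R * `|q| ^+ 2.
  rewrite !normCK !rmorphD !rmorphN !rmorphM /= conjC_nat.
  ring.
by rewrite -E lerDl exprn_ge0.
Qed.

Section States.
Variables n W : nat.
Local Notation R := (reg n W).

Definition nrm2 (v : state n W) : algC := \sum_(i : R) `|v i| ^+ 2.
Definition wt (v : state n W) (a : bits n) : algC :=
  \sum_(i : R | i.1.1 == a) `|v i| ^+ 2.

Lemma nrm2_ge0 v : 0 <= nrm2 v.
Proof. by apply: sumr_ge0 => i _; rewrite exprn_ge0. Qed.

Definition sig (g : {perm bits n}) (i : R) : R :=
  (i.1.1, bxor n i.1.2 (g i.1.1), i.2).

Lemma sigK g : involutive (sig g).
Proof. by case=> [[a b] w]; rewrite /sig /= bxorK. Qed.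

Lemma sig_inj g : injective (sig g).
Proof. exact: inv_inj (@sigK g). Qed.

Lemma oracleE g v i : applyop n W (oracle n W g) v i = v (sig g i).
Proof.
rewrite /applyop (bigD1 (sig g i)) //= big1 ?addr0.
  by rewrite /oracle /sig /= !eqxx bxorK /= eqxx mul1r.
move=> j ne; rewrite /oracle.
case: i ne => [[a b] w]; case: j => [[ja jb] jw] /= ne.
case: eqP => [ea|]; last by rewrite mul0r.
case: eqP => [eb|]; last by rewrite /= mul0r.
case: eqP => [ew|]; last by rewrite /= mul0r.
by move: ne; rewrite /sig /= ea eb ew bxorK eqxx.
Qed.

Lemma nrm2_oracle g v : nrm2 (applyop n W (oracle n W g) v) = nrm2 v.
Proof.
rewrite /nrm2 (reindex_inj (@sig_inj g)) /=.
by apply: eq_bigr => i _; rewrite oracleE sigK.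
Qed.

Lemma nrm2_unitary (U : op n W) v : unitary n W U -> nrm2 (applyop n W U v) = nrm2 v.
Proof.
move=> hU; rewrite /nrm2 /applyop.
transitivity (\sum_(j : R) \sum_(k : R) v j * (v k)^* * \sum_(i : R) (U i k)^* * U i j).
  rewrite (eq_bigr (fun i => \sum_(j : R) \sum_(k : R) U i j * v j * ((U i k)^* * (v k)^*))); last first.
    move=> i _; rewrite normCK rmorph_sum /= mulr_suml; apply: eq_bigr => j _.
    rewrite mulr_sumr; apply: eq_bigr => k _; by rewrite rmorphM.
  rewrite exchange_big /=; apply: eq_bigr => j _.
  rewrite exchange_big /=; apply: eq_bigr => k _.
  rewrite mulr_sumr; apply: eq_bigr => i _; ring.
apply: eq_bigr => j _; rewrite normCK.
rewrite [LHS](bigD1 j) //= hU eqxx mulr1 big1 ?addr0 // => k nk.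
by rewrite hU (negbTE nk) mulr0.
Qed.

Lemma applyopB (U : op n W) a b i :
  applyop n W U a i - applyop n W U b i = applyop n W U (fun j => a j - b j) i.
Proof. by rewrite /applyop -sumrB; apply: eq_bigr => j _; rewrite mulrBr. Qed.

Lemma oracle_diff (g g' : {perm bits n}) v (d1 d2 : bits n) :
  (forall a, g' a != g a -> (a == d1) || (a == d2)) ->
  nrm2 (fun i => applyop n W (oracle n W g') v i - applyop n W (oracle n W g) v i)
   <= 4%:R * (wt v d1 + wt v d2).
Proof.
move=> hd.
pose P (i : R) : algC := (g' i.1.1 != g i.1.1)%:R.
have step1 : nrm2 (fun i => applyop n W (oracle n W g') v i - applyop n W (oracle n W g) v i)
   <= \sum_(i : R) P i * (2%:R * `|v (sig g' i)| ^+ 2 + 2%:R * `|v (sig g i)| ^+ 2).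
  apply: ler_sum => i _; rewrite !oracleE /P.
  case: eqP => [e|_].
    by rewrite /sig e subrr normr0 expr0n /= mul0r.
  by rewrite mul1r -(normrN (v (sig g i))) norm_add2.
have hs : forall h : {perm bits n}, \sum_(i : R) P i * `|v (sig h i)| ^+ 2 = \sum_(i : R) P i * `|v i| ^+ 2.
  move=> h; rewrite [RHS](reindex_inj (@sig_inj h)) /=.
  by apply: eq_bigr => i _; rewrite /P /sig.
apply: (le_trans step1).
have -> : \sum_(i : R) P i * (2%:R * `|v (sig g' i)| ^+ 2 + 2%:R * `|v (sig g i)| ^+ 2)
   = 4%:R * \sum_(i : R) P i * `|v i| ^+ 2.
  rewrite (eq_bigr (fun i => 2%:R * (P i * `|v (sig g' i)| ^+ 2) + 2%:R * (P i * `|v (sig g i)| ^+ 2))); last by move=> i _; ring.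
  by rewrite big_split /= -!mulr_sumr !hs -mulrDl -natrD.
rewrite ler_wpM2l ?ler0n // /wt (big_mkcond (fun i : R => i.1.1 == d1)) (big_mkcond (fun i : R => i.1.1 == d2)) -big_split /=.
apply: ler_sum => i _; rewrite /P.
case: (boolP (g' i.1.1 != g i.1.1)) => ne /=; last first.
  by rewrite mul0r; apply: addr_ge0; case: ifP => _ //; rewrite exprn_ge0.
rewrite mul1r; have := hd _ ne; case/orP => ->.
  by rewrite lerDl; case: ifP => _ //; rewrite exprn_ge0.
by rewrite lerDr; case: ifP => _ //; rewrite exprn_ge0.
Qed.

End States.

Lemma cardD (r c : nat) : #|[set i : 'I_(r + c) | (i < r)%N]| = r.
Proof.
have -> : [set i : 'I_(r + c) | (i < r)%N] = [set widen_ord (leq_addr c r) j | j in 'I_r].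
  apply/setP => i; rewrite inE; apply/idP/imsetP => [ir | [j _ ->]].
    by exists (Ordinal ir) => //; apply/val_inj.
  by rewrite /= ltn_ord.
rewrite card_imset ?card_ord // => i j /(congr1 val) /= e; exact/val_inj.
Qed.

Lemma cardX1 (r c : nat) : #|X1 r c| = (2 ^ r)%N.
Proof.
have -> : X1 r c = [set x in pffun_on false [set i : 'I_(r + c) | (i < r)%N] predT].
  apply/setP => x; rewrite !inE; apply/forallP/pffun_onP => [h | [h _] i].
    split; last by move=> y _.
    apply/subsetP => i; rewrite !inE /= => xi; rewrite ltnNge; apply/negP => ri.
    by have := h i; rewrite ri /=; case: (x i) xi.
  apply/implyP => ri; apply/negP => xi; have := subsetP h i; rewrite !inE xi /= => /(_ isT).
  by rewrite ltnNge ri.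
by rewrite cardsE card_pffun_on cardD card_bool.
Qed.

Lemma cardX2 (r c : nat) : #|X2 r c| = (2 ^ c)%N.
Proof.
have -> : X2 r c = [set x in pffun_on false (~: [set i : 'I_(r + c) | (i < r)%N]) predT].
  apply/setP => x; rewrite !inE; apply/forallP/pffun_onP => [h | [h _] i].
    split; last by move=> y _.
    apply/subsetP => i; rewrite !inE /= => xi; apply/negP => ri.
    by have := h i; rewrite ri /=; case: (x i) xi.
  apply/implyP => ri; apply/negP => xi; have := subsetP h i; rewrite !inE xi /= => /(_ isT).
  by rewrite ri.
rewrite cardsE card_pffun_on card_bool.
have := cardsC [set i : 'I_(r + c) | (i < r)%N]; rewrite cardD card_ord => /addnI ->.
by [].
Qed.

Lemma cardbits n : #|bits n| = (2 ^ n)%N.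
Proof. by rewrite card_ffun card_bool card_ord. Qed.

Lemma nrm2_ext n W (v w : state n W) : (forall i, v i = w i) -> nrm2 v = nrm2 w.
Proof. by move=> h; apply: eq_bigr => i _; rewrite h. Qed.

Lemma sum_wt n W (v : state n W) : \sum_(a : bits n) wt v a = nrm2 v.
Proof.
rewrite /wt /nrm2.
rewrite (eq_bigr (fun a => \sum_(i : reg n W) (i.1.1 == a)%:R * `|v i| ^+ 2)); last first.
  by move=> a _; rewrite big_mkcond; apply: eq_bigr => i _; case: ifP; rewrite ?mul1r ?mul0r.
rewrite exchange_big /=; apply: eq_bigr => i _.
rewrite (bigD1 i.1.1) //= eqxx mul1r big1 ?addr0 // => a na.
by rewrite eq_sym (negbTE na) mul0r.
Qed.

Lemma sum_sub_le (I : finType) (P : pred I) (F : I -> algC) :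
  (forall i, 0 <= F i) -> \sum_(i | P i) F i <= \sum_i F i.
Proof.
move=> h; rewrite [X in _ <= X](bigID P) /= lerDl.
by apply: sumr_ge0 => i _.
Qed.

Section Main.
Variables (r c W T : nat) (U : nat -> op (r + c) W) (s : nat -> bool)
  (out : reg (r + c) W -> bits (r + c) * bits (r + c)).
Hypothesis hU : forall t, (t <= T)%N -> unitary (r + c) W (U t).
Local Notation n := (r + c).
Local Notation R := (reg n W).
Local Notation run' f t := (run n W U s f t).

Lemma nrm2_init : nrm2 (init n W) = 1.
Proof.
rewrite /nrm2 (bigD1 (bzero n, bzero n, ord0)) //= big1 ?addr0.
  by rewrite /init eqxx normr1 expr1n.
by move=> i ni; rewrite /init (negbTE ni) normr0 expr0n.
Qed.

Lemma nrm2_run f t : (t <= T)%N -> nrm2 (run' f t) = 1.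
Proof.
elim: t => [|t IH] ht /=.
  rewrite nrm2_unitary ?nrm2_init //; exact: hU.
rewrite nrm2_unitary; last exact: hU.
by rewrite nrm2_oracle IH // ltnW.
Qed.

Definition qry (f : {perm bits n}) k := if s k then (f^-1)%g else f.

Definition edif (g g' : {perm bits n}) k : algC :=
  nrm2 (fun i => applyop n W (oracle n W (qry g' k)) (run' g k) i
                 - applyop n W (oracle n W (qry g k)) (run' g k) i).

Lemma hybrid g g' t : (t <= T)%N ->
  nrm2 (fun i => run' g' t i - run' g t i) <= t%:R * \sum_(k < t) edif g g' k.
Proof.
elim: t => [|t IH] ht.
  rewrite mul0r /nrm2 big1 // => i _ /=.
  by rewrite subrr normr0 expr0n.
have IH' := IH (ltnW ht).
set p := fun j => applyop n W (oracle n W (qry g' t)) (fun k => run' g' t k - run' g t k) j.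
set q := fun j => applyop n W (oracle n W (qry g' t)) (run' g t) j
                 - applyop n W (oracle n W (qry g t)) (run' g t) j.
have E : nrm2 (fun i => run' g' t.+1 i - run' g t.+1 i) = nrm2 (fun j => p j + q j).
  transitivity (nrm2 (applyop n W (U t.+1) (fun j => p j + q j))); last exact: nrm2_unitary (hU ht).
  apply: nrm2_ext => i /=; rewrite applyopB; apply: eq_bigr => j _; congr (_ * _).
  rewrite /p /q -applyopB /qry; ring.
have Hp : nrm2 p = nrm2 (fun k => run' g' t k - run' g t k) by rewrite /p nrm2_oracle.
have Hq : nrm2 q = edif g g' t by [].
rewrite E big_ord_recr /=.
have [t0|tpos] := posnP t.
  have p0 : forall j, p j = 0.
    move=> j; rewrite /p /applyop big1 // => k _ /=; by rewrite t0 subrr mulr0.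
  rewrite -Hq t0 big_ord0 add0r mul1r; rewrite le_eqVlt; apply/orP; left; apply/eqP/nrm2_ext => j; by rewrite p0 add0r.
have key : t%:R * nrm2 (fun j => p j + q j) <=
    (t.+1)%:R * nrm2 p + (t * t.+1)%N%:R * nrm2 q.
  rewrite /nrm2 !mulr_sumr -big_split /=; apply: ler_sum => j _; exact: norm_addt.
rewrite -(ler_pM2l (_ : 0 < t%:R)) ?ltr0n //.
apply: (le_trans key); rewrite Hp Hq.
apply: le_trans (lerD (ler_wpM2l (ler0n _ _) IH') (lexx _)) _.
rewrite natrM le_eqVlt; apply/orP; left; apply/eqP; ring.
Qed.


Definition pr (f : {perm bits n}) (x y : bits n) : algC :=
  \sum_(i : R | out i == (x, y)) `|run' f T i| ^+ 2.

Lemma pr_ge0 f x y : 0 <= pr f x y.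
Proof. by apply: sumr_ge0 => i _; rewrite exprn_ge0. Qed.

Definition dd (g : {perm bits n}) (x : bits n) k := if s k then g x else x.

Lemma pr_swap (g : {perm bits n}) (x z : bits n) :
  pr (tperm x z * g)%g x (g z) <= 2%:R * pr g x (g z) +
    8%:R * T%:R * \sum_(k < T) (wt (run' g k) (dd g x k) + wt (run' g k) (dd g z k)).
Proof.
set g' := (tperm x z * g)%g.
have h1 : pr g' x (g z) <= 2%:R * pr g x (g z) + 2%:R * nrm2 (fun i => run' g' T i - run' g T i).
  have h2 : pr g' x (g z) <= \sum_(i : R | out i == (x, g z))
      (2%:R * `|run' g T i| ^+ 2 + 2%:R * `|run' g' T i - run' g T i| ^+ 2).
    apply: ler_sum => i _.
    by have := norm_add2 (run' g T i) (run' g' T i - run' g T i); rewrite addrC subrK.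
  apply: (le_trans h2); rewrite big_split /= -!mulr_sumr lerD2l ler_wpM2l ?ler0n //.
  apply: sum_sub_le => i; exact: exprn_ge0.
have qd : forall k a, qry g' k a != qry g k a -> (a == dd g x k) || (a == dd g z k).
  move=> k a.
rewrite /qry /dd /g'; case: (s k).
  rewrite invMg tpermV permM; apply: contraR; case/norP => ha1 ha2.
  rewrite tpermD //.
    by apply: contra ha1 => /eqP ->; rewrite permKV.
  by apply: contra ha2 => /eqP ->; rewrite permKV.
rewrite permM; apply: contraR; case/norP => ha1 ha2.
by rewrite tpermD // eq_sym.

apply: (le_trans h1); rewrite lerD2l.
apply: le_trans (ler_wpM2l (ler0n _ 2) (hybrid g g' (leqnn T))) _.
have hs : \sum_(k < T) edif g g' k <=
   \sum_(k < T) 4%:R * (wt (run' g k) (dd g x k) + wt (run' g k) (dd g z k)).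
  apply: ler_sum => k _; apply: oracle_diff => a.
  exact: qd.
apply: le_trans (ler_wpM2l (ler0n _ 2) (ler_wpM2l (ler0n _ T) hs)) _.
rewrite -mulr_sumr le_eqVlt; apply/orP; left; apply/eqP.
ring.
Qed.


Local Notation A := (X1 r c).
Local Notation B := (X2 r c).

Definition kk (f : {perm bits n}) := #|[set a | (a \in A) && (f a \in B)]|.

Lemma kkE f : (kk f)%:R = \sum_(a : bits n) ((a \in A) && (f a \in B))%:R :> algC.
Proof.
rewrite /kk -sum1_card natr_sum big_mkcond /=; apply: eq_bigr => a _.
by rewrite inE; case: ifP.
Qed.

Lemma kk_swap g x z : (kk (tperm x z * g)%g <= kk g + 2)%N.
Proof.
rewrite /kk; set M := [set a | _ && _].
have sub : M \subset [set a | (a \in A) && (g a \in B)] :|: [set x; z].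
  apply/subsetP => a; rewrite !inE permM.
  case: (a =P x) => [->|/eqP ax]; first by move=> _; rewrite ?eqxx /= ?orbT.
  case: (a =P z) => [->|/eqP az]; first by move=> _; rewrite ?eqxx /= ?orbT.
  by rewrite tpermD ?orbF // eq_sym.
apply: leq_trans (subset_leq_card sub) _.
apply: leq_trans (leq_card_setU _ _) _; rewrite leq_add2l cards2; by case: (x != z).
Qed.

Lemma card_Xpairs f : #|Xpairs r c f| = kk f.
Proof.
rewrite /kk.
have -> : Xpairs r c f = [set (a, f a) | a in [set a | (a \in A) && (f a \in B)]].
  apply/setP => -[a b]; rewrite inE /=; apply/idP/imsetP.
    case/and3P => ha hb /eqP eb; exists a; first by rewrite inE ha eb hb.
    by rewrite eb.
  case=> a'; rewrite inE => /andP[ha hb] [-> ->]; by rewrite ha hb eqxx.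
by apply: card_imset => a1 a2 [].
Qed.

Lemma successE f : success r c W T U s out f =
  \sum_(a : bits n) ((a \in A) && (f a \in B))%:R * pr f a (f a).
Proof.
rewrite /success /pr.
rewrite (eq_bigr (fun a => \sum_(i : R) ((a \in A) && (f a \in B) && (out i == (a, f a)))%:R
     * `|run' f T i| ^+ 2)); last first.
  move=> a _; rewrite mulr_sumr [LHS]big_mkcond /=; apply: eq_bigr => i _.
  by case: (_ && _); case: (out i == _); rewrite ?mul1r ?mul0r.
rewrite exchange_big /= big_mkcond /=; apply: eq_bigr => i _.
rewrite (bigD1 (out i).1) //= big1 ?addr0; last first.
  move=> a na; case: (out i == (a, f a)) /eqP => [e|]; last by rewrite andbF mul0r.
  by move: na; rewrite e eqxx.
case: (out i) => [x y] /=.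
have -> : ((x \in A) && (f x \in B) && ((x, y) == (x, f x))) = [&& x \in A, y \in B & f x == y].
  rewrite xpair_eqE eqxx /=; case: (f x =P y) => [<-|ne]; first by rewrite eqxx !andbT.
  rewrite andbF; case: (y =P f x) => [e|_]; last by rewrite !andbF.
  by case: ne; rewrite e.
by case: ifP; rewrite ?mul1r ?mul0r.
Qed.


Lemma sum_perm (g : {perm bits n}) (F : bits n -> algC) :
  \sum_(z : bits n) F (g z) = \sum_(y : bits n) F y.
Proof. by rewrite [RHS](reindex_inj (@perm_inj _ g)). Qed.

Lemma sum_ind (P : pred (bits n)) : \sum_(y : bits n) (P y)%:R = #|P|%:R :> algC.
Proof.
rewrite -sum1_card natr_sum [RHS]big_mkcond /=; apply: eq_bigr => y _.
by rewrite unfold_in; case: (P y).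
Qed.

Lemma sum_ind_set (S : {set bits n}) : \sum_(y : bits n) (y \in S)%:R = #|S|%:R :> algC.
Proof.
rewrite -sum1_card natr_sum [RHS]big_mkcond /=; apply: eq_bigr => y _.
by case: (y \in S).
Qed.

Lemma sum_ind_perm (g : {perm bits n}) (S : {set bits n}) :
  \sum_(z : bits n) (g z \in S)%:R = #|S|%:R :> algC.
Proof.
rewrite -sum_ind_set; exact: (sum_perm g (fun y => (y \in S)%:R)).
Qed.

Lemma swap_sum x (F : {perm bits n} -> algC) :
  #|bits n|%:R * \sum_(f : {perm bits n}) (f x \in B)%:R * F f =
  \sum_(g : {perm bits n}) \sum_(z : bits n) (g z \in B)%:R * F (tperm x z * g)%g.
Proof.
rewrite [RHS]exchange_big /=.
rewrite [RHS](eq_bigr (fun z => \sum_(f : {perm bits n}) (f x \in B)%:R * F f)); last first.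
  move=> z _; rewrite [RHS](reindex_inj (@mulgI _ (tperm x z))) /=.
  by apply: eq_bigr => f _; rewrite permM tpermL.
rewrite -sum1_card natr_sum mulr_suml; apply: eq_big => // z _; by rewrite mul1r.
Qed.

Lemma sum_pr_all (g : {perm bits n}) : \sum_(a : bits n) \sum_(y : bits n) pr g a y = nrm2 (run' g T).
Proof.
rewrite pair_big /=.
rewrite (eq_bigr (fun p => \sum_(i : R) (out i == p)%:R * `|run' g T i| ^+ 2)); last first.
  move=> [a y] _; rewrite /pr big_mkcond /=; apply: eq_bigr => i _.
  by case: ifP; rewrite ?mul1r ?mul0r.
rewrite exchange_big; apply: eq_bigr => i _ /=.
rewrite (bigD1 (out i)) //= eqxx mul1r big1 ?addr0 // => p np.
by rewrite eq_sym (negbTE np) mul0r.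
Qed.

Lemma sum_pr (g : {perm bits n}) : \sum_(a : bits n) \sum_(z : bits n)
   (a \in A)%:R * (g z \in B)%:R * pr g a (g z) <= 1.
Proof.
rewrite -[X in _ <= X](nrm2_run g (leqnn T)) -sum_pr_all; apply: ler_sum => a _.
have -> : \sum_(z : bits n) (a \in A)%:R * (g z \in B)%:R * pr g a (g z) =
   \sum_(y : bits n) (a \in A)%:R * (y \in B)%:R * pr g a y.
  exact: (sum_perm g (fun y => (a \in A)%:R * (y \in B)%:R * pr g a y)).
apply: ler_sum => y _.
by case: (a \in A); case: (y \in B); rewrite /= ?mul1r ?mul0r ?pr_ge0.
Qed.

Lemma sum_wt_dd (g : {perm bits n}) k (P : pred (bits n)) : (k <= T)%N ->
  \sum_(a : bits n) (P a)%:R * wt (run' g k) (dd g a k) <= 1.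
Proof.
move=> hk; rewrite -[X in _ <= X](nrm2_run g hk) -sum_wt.
apply: le_trans (_ : \sum_(a : bits n) wt (run' g k) (dd g a k) <= _).
  apply: ler_sum => a _; case: (P a); rewrite /= ?mul1r ?mul0r //.
  by apply: sumr_ge0 => i _; rewrite exprn_ge0.
rewrite /dd; case: (s k) => //.
rewrite le_eqVlt; apply/orP; left; apply/eqP; exact: (sum_perm g (fun y => wt (run' g k) y)).
Qed.

Lemma sum_wt1 (g : {perm bits n}) k : (k <= T)%N ->
  \sum_(a : bits n) \sum_(z : bits n) (a \in A)%:R * (g z \in B)%:R *
     (wt (run' g k) (dd g a k) + wt (run' g k) (dd g z k)) <= #|B|%:R + #|A|%:R.
Proof.
move=> hk.
have e1 : \sum_(a : bits n) \sum_(z : bits n) (a \in A)%:R * (g z \in B)%:R * wt (run' g k) (dd g a k)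
   = #|B|%:R * \sum_(a : bits n) (a \in A)%:R * wt (run' g k) (dd g a k).
  rewrite mulr_sumr; apply: eq_bigr => a _.
  rewrite -(sum_ind_perm g B) mulr_suml; apply: eq_bigr => z _; ring.
have e2 : \sum_(a : bits n) \sum_(z : bits n) (a \in A)%:R * (g z \in B)%:R * wt (run' g k) (dd g z k)
   = #|A|%:R * \sum_(z : bits n) (g z \in B)%:R * wt (run' g k) (dd g z k).
  rewrite -(sum_ind_set A) mulr_suml; apply: eq_bigr => a _.
  by rewrite mulr_sumr; apply: eq_bigr => z _; ring.
rewrite (eq_bigr (fun a => \sum_(z : bits n) (a \in A)%:R * (g z \in B)%:R * wt (run' g k) (dd g a k)
   + \sum_(z : bits n) (a \in A)%:R * (g z \in B)%:R * wt (run' g k) (dd g z k))); last first.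
  by move=> a _; rewrite -big_split; apply: eq_bigr => z _; exact: mulrDr.
rewrite big_split /= e1 e2.
apply: lerD.
  rewrite -[X in _ <= X]mulr1 ler_wpM2l ?ler0n //; exact: sum_wt_dd.
rewrite -[X in _ <= X]mulr1 ler_wpM2l ?ler0n //.
exact: (sum_wt_dd g (fun z => g z \in B) hk).
Qed.


Lemma sum_const_ord (m : nat) (C : algC) : \sum_(k < m) C = m%:R * C.
Proof. by rewrite big_const_ord iter_addr addr0 mulr_natl. Qed.

Definition Cst : algC := 2%:R + 8%:R * T%:R * (T%:R * (#|B|%:R + #|A|%:R)).

Definition Gt (a : bits n) (g : {perm bits n}) (z : bits n) : algC :=
  (a \in A)%:R * (g z \in B)%:R * (2%:R * pr g a (g z) +
    8%:R * T%:R * \sum_(k < T) (wt (run' g k) (dd g a k) + wt (run' g k) (dd g z k))).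

Lemma sum_Gt g : \sum_(a : bits n) \sum_(z : bits n) Gt a g z <= Cst.
Proof.
rewrite /Gt.
rewrite (eq_bigr (fun a => 2%:R * \sum_(z : bits n) ((a \in A)%:R * (g z \in B)%:R * pr g a (g z))
   + 8%:R * T%:R * \sum_(k < T) \sum_(z : bits n) ((a \in A)%:R * (g z \in B)%:R *
       (wt (run' g k) (dd g a k) + wt (run' g k) (dd g z k))))); last first.
  move=> a _; move: (pr g a) => P.
  rewrite exchange_big /= !mulr_sumr -big_split /=; apply: eq_bigr => z _.
  rewrite mulr_sumr mulr_sumr mulrDr; congr (_ + _); first ring.
  rewrite mulr_sumr; apply: eq_bigr => k _; ring.
rewrite big_split /= -!mulr_sumr /Cst.
apply: lerD.
  rewrite -[X in _ <= X]mulr1 ler_wpM2l ?ler0n //; exact: sum_pr.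
rewrite ler_wpM2l ?mulr_ge0 ?ler0n // exchange_big /= -sum_const_ord.
apply: ler_sum => k _; apply: sum_wt1; exact: ltnW.
Qed.

Lemma Gt_ge0 a g z : 0 <= Gt a g z.
Proof.
rewrite /Gt; apply: mulr_ge0; first by apply: mulr_ge0; rewrite ler0n.
apply: addr_ge0; first by rewrite mulr_ge0 ?ler0n ?pr_ge0.
apply: mulr_ge0; first by rewrite mulr_ge0 ?ler0n.
apply: sumr_ge0 => k _; apply: addr_ge0; apply: sumr_ge0 => i _; exact: exprn_ge0.
Qed.

Lemma main_ineq : #|bits n|%:R * \sum_(f : {perm bits n}) (kk f)%:R * success r c W T U s out f
   <= \sum_(g : {perm bits n}) ((kk g)%:R + 2%:R) * Cst.
Proof.
pose F (a : bits n) (f : {perm bits n}) := (a \in A)%:R * (kk f)%:R * pr f a (f a).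
have E1 : \sum_(f : {perm bits n}) (kk f)%:R * success r c W T U s out f =
    \sum_(a : bits n) \sum_(f : {perm bits n}) (f a \in B)%:R * F a f.
  rewrite exchange_big /=; apply: eq_bigr => f _.
  rewrite successE mulr_sumr; apply: eq_bigr => a _; rewrite /F.
  by case: (a \in A); case: (f a \in B); rewrite /=; ring.
have H : forall a (g : {perm bits n}) z, (g z \in B)%:R * F a (tperm a z * g)%g <= ((kk g)%:R + 2%:R) * Gt a g z.
  move=> a g z; rewrite /F permM tpermL.
  case hA: (a \in A); case hB: (g z \in B); rewrite /= ?mulr0n ?mul0r ?mulr1n ?mul1r;
    try by apply: mulr_ge0; rewrite ?addr_ge0 ?ler0n ?Gt_ge0.
  rewrite /Gt hA hB /= mulr1n !mul1r.
  apply: ler_pM; rewrite ?ler0n ?pr_ge0 //.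
    by rewrite -natrD ler_nat; exact: kk_swap.
  exact: pr_swap.
apply: le_trans (_ : _ <= #|bits n|%:R * \sum_(a : bits n) \sum_(f : {perm bits n}) (f a \in B)%:R * F a f) _.
  by rewrite le_eqVlt; apply/orP; left; apply/eqP; congr (_ * _); exact: E1.
rewrite mulr_sumr.
apply: le_trans (_ : \sum_(a : bits n) \sum_(g : {perm bits n}) \sum_(z : bits n)
   ((kk g)%:R + 2%:R) * Gt a g z <= _).
  apply: ler_sum => a _; rewrite swap_sum; apply: ler_sum => g _; apply: ler_sum => z _.
  exact: H.
rewrite exchange_big /=; apply: ler_sum => g _.
rewrite (eq_bigr (fun a => ((kk g)%:R + 2%:R) * \sum_(z : bits n) Gt a g z)); last first.
  by move=> a _; rewrite mulr_sumr.
rewrite -mulr_sumr ler_wpM2l ?addr_ge0 ?ler0n //; exact: sum_Gt.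
Qed.


Lemma S_eq : #|bits n|%:R * \sum_(f : {perm bits n}) (kk f)%:R =
  #|A|%:R * #|B|%:R * \sum_(g : {perm bits n}) (1 : algC).
Proof.
rewrite (eq_bigr (fun f : {perm bits n} => \sum_(a : bits n) (f a \in B)%:R * (a \in A)%:R)); last first.
  move=> f _; rewrite kkE; apply: eq_bigr => a _; by rewrite -natrM mulnb andbC.
rewrite exchange_big /= mulr_sumr.
rewrite (eq_bigr (fun a => (a \in A)%:R * (#|B|%:R * \sum_(g : {perm bits n}) (1 : algC)))); last first.
  move=> a _; have := swap_sum a (fun _ => (a \in A)%:R); rewrite /= => ->.
  rewrite mulr_sumr mulr_sumr; apply: eq_bigr => g _.
  by rewrite -mulr_suml sum_ind_perm mulr1 mulrC.
by rewrite -mulr_suml sum_ind_set mulrA.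
Qed.

Lemma final : eps r c W T U s out <= 3%:R * Cst / #|bits n|%:R.
Proof.
set P := \sum_(g : {perm bits n}) (1 : algC).
have Ppos : 0 < P.
  rewrite /P (bigD1 1%g) //=; apply: (lt_le_trans ltr01); rewrite lerDl.
  by apply: sumr_ge0 => i _; exact: ler01.
have hN : #|bits n|%:R = #|A|%:R * #|B|%:R :> algC.
  by rewrite cardbits cardX1 cardX2 -natrM -expnD.
have Npos : 0 < #|bits n|%:R :> algC by rewrite cardbits ltr0n expn_gt0.
have SP : \sum_(f : {perm bits n}) (kk f)%:R = P.
  apply: (mulfI (_ : #|bits n|%:R != 0 :> algC)); first by rewrite gt_eqF.
  by rewrite S_eq hN.
set X := \sum_(f : {perm bits n}) (kk f)%:R * success r c W T U s out f.
have epsE : eps r c W T U s out = P^-1 * X.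
  rewrite /eps /DX /X mulr_sumr; apply: eq_bigr => f _.
  rewrite card_Xpairs natr_sum.
  under eq_bigr do rewrite card_Xpairs.
  rewrite SP; ring.
have MI : #|bits n|%:R * X <= 3%:R * P * Cst.
  apply: le_trans (main_ineq) _.
  have S2 : \sum_(g : {perm bits n}) (2%:R : algC) = 2%:R * P.
    by rewrite /P mulr_sumr; apply: eq_bigr => g _; rewrite mulr1.
  rewrite -mulr_suml big_split /= SP S2.
  rewrite le_eqVlt; apply/orP; left; apply/eqP; ring.
rewrite ler_pdivlMr // epsE.
rewrite -mulrA [X * _]mulrC -(ler_pM2l Ppos) mulrA mulfV ?gt_eqF // mul1r.
apply: (le_trans MI); rewrite le_eqVlt; apply/orP; left; apply/eqP; ring.
Qed.

End Main.

Unset Implicit Arguments.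
Set Strict Implicit.

Theorem theorem4 (r c : nat) (hr : (1 <= r)%N) (hc : (1 <= c)%N)
  (W T : nat) (U : nat -> op (r + c) W) (s : nat -> bool)
  (out : reg (r + c) W -> bits (r + c) * bits (r + c)) :
  (forall t, (t <= T)%N -> unitary (r + c) W (U t)) ->
  0 < eps r c W T U s out ->
  eps r c W T U s out <= 80%:R * (T.+1 ^ 2)%:R / (2 ^ minn r c)%:R.
Proof.
move=> hU _; apply: le_trans (@final r c W T U s out hU) _.
rewrite /Cst cardX1 cardX2 cardbits.
rewrite ler_pdivrMr ?ltr0n ?expn_gt0 // [X in _ <= X]mulrAC ler_pdivlMr ?ltr0n ?expn_gt0 //.
rewrite -!(natrD, natrM) ler_nat.
have -> : (2 ^ (r + c)%R = 2 ^ r * 2 ^ c)%N by rewrite -expnD.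
have hMa : (2 ^ minn r c <= 2 ^ r)%N by rewrite leq_pexp2l // geq_minl.
have hMb : (2 ^ minn r c <= 2 ^ c)%N by rewrite leq_pexp2l // geq_minr.
have ha : (1 <= 2 ^ c)%N by rewrite expn_gt0.
move: hMa hMb ha; set a := (2 ^ r)%N; set b := (2 ^ c)%N; set M := (2 ^ minn r c)%N.
move=> hMa hMb ha.
have h3 : (M <= a * b)%N by rewrite (leq_trans hMa) // leq_pmulr.
have h4 : (T * T * (M * (b + a)) <= T * T * (2 * (a * b)))%N.
  rewrite leq_mul2l mulnDr; apply/orP; right.
  rewrite mul2n -addnn leq_add //.
    by rewrite leq_mul2r hMa orbT.
  by rewrite [(a * b)%N]mulnC leq_mul2r hMb orbT.
have -> : (3 * (2 + 8 * T * (T * (b + a))) * M = 6 * M + 24 * (T * T * (M * (b + a))))%N.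
  ring.
apply: (leq_trans (leq_add (leq_mul (leqnn 6) h3) (leq_mul (leqnn 24) h4))).
have -> : (80 * T.+1 ^ 2 * (a * b) = 80 * (T * T * (a * b)) + (160 * (T * (a * b)) + 80 * (a * b)))%N.
  ring.
have -> : (6 * (a * b) + 24 * (T * T * (2 * (a * b))) = 48 * (T * T * (a * b)) + 6 * (a * b))%N.
  ring.
rewrite leq_add //; first by rewrite leq_mul2r orbC.
by rewrite (leq_trans _ (leq_addl _ _)) // leq_mul2r orbC.
Qed.
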